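(* Let $Q$ be a right power alternative loop and let $S\le Q$ be a subloop generated by one element (hence $S$ is a cyclic group). Then $Q$ has a left coset decomposition modulo $S$, i.e., any two left cosets $xS$, $yS$ ($x,y\in Q$) are either disjoint or equal.
   Context: A loop is power-associative if each element generates a group; a power-associative loop is right power alternative if $(xy^i)y^j=xy^{i+j}$ for all elements $x,y$ and all integers $i,j$. For $x\in Q$, $xS=\{xs:s\in S\}$. *)

(* Defs.v *)
From Stdlib Require Import ZArith.
Set Implicit Arguments.

Section Loops.
Variables (T : Type) (mul : T -> T -> T) (e : T) (ldiv rdiv : T -> T -> T).

(* A loop: quasigroup (unique solvability, via left/right division) with identity. *)
Definition is_loop : Prop :=
  (forall x, mul e x = x) /\ (forall x, mul x e = x) /\
  (forall x y, mul x (ldiv x y) = y) /\ (forall x y, ldiv x (mul x y) = y) /\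
  (forall x y, mul (rdiv y x) x = y) /\ (forall x y, rdiv (mul y x) x = y).

Definition subloop (P : T -> Prop) : Prop :=
  P e /\
  (forall x y, P x -> P y -> P (mul x y)) /\
  (forall x y, P x -> P y -> P (ldiv x y)) /\
  (forall x y, P x -> P y -> P (rdiv x y)).

Definition gen (A : T -> Prop) (z : T) : Prop :=
  forall P, subloop P -> (forall w, A w -> P w) -> P z.

Definition gen1 (a : T) : T -> Prop := gen (fun w => w = a).

Definition power_assoc : Prop :=
  forall x u v w, gen1 x u -> gen1 x v -> gen1 x w ->
    mul (mul u v) w = mul u (mul v w).

(* powers: y^0 = e, y^(n+1) = y^n * y, y^(-n) = inverse of y^n
   (inverse taken as e.g. ldiv z e; inside the cyclic group <y> this is the
   two-sided inverse) *)
Fixpoint npow (y : T) (n : nat) : T :=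
  match n with O => e | S n => mul (npow y n) y end.

Definition zpow (y : T) (i : Z) : T :=
  match i with
  | Z0 => e
  | Zpos p => npow y (Pos.to_nat p)
  | Zneg p => ldiv (npow y (Pos.to_nat p)) e
  end.

Definition right_power_alternative : Prop :=
  power_assoc /\
  forall x y (i j : Z), mul (mul x (zpow y i)) (zpow y j) = mul x (zpow y (i + j)).

Definition lcoset (x : T) (S : T -> Prop) (z : T) : Prop :=
  exists s, S s /\ z = mul x s.

End Loops.

(* Main.v *)
Require Import Defs.
From Stdlib Require Import ZArith Classical.

Theorem lemma5p2 (T : Type) (mul : T -> T -> T) (e : T) (ldiv rdiv : T -> T -> T)
  (HQ : is_loop mul e ldiv rdiv)
  (Hrpa : right_power_alternative mul e ldiv rdiv)
  (a : T) :
  let S := gen1 mul e ldiv rdiv a in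
  forall x y : T,
    (forall z, ~ (lcoset mul x S z /\ lcoset mul y S z)) \/
    (forall z, lcoset mul x S z <-> lcoset mul y S z).
Proof.
  destruct HQ as (H1l & H1r & Hld1 & Hld2 & Hrd1 & Hrd2).
  destruct Hrpa as [_ R].
  set (p := zpow mul e ldiv a).
  assert (Hp0 : p 0%Z = e) by reflexivity.
  assert (Hpm : forall i j, mul (p i) (p j) = p (i + j)%Z).
  { intros i j. pose proof (R e a i j) as H. rewrite !H1l in H. exact H. }
  assert (Hx : forall x i j, mul (mul x (p i)) (p j) = mul x (p (i + j)%Z)).
  { intros; apply R. }
  intros S.
  assert (HSP : forall z, S z -> exists i, z = p i).
  { intros z Hz. apply Hz.
    - repeat split.
      + exists 0%Z; reflexivity.
      + intros u v [i ->] [j ->]. exists (i + j)%Z. apply Hpm.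
      + intros u v [i ->] [j ->]. exists (j - i)%Z.
        rewrite <- (Hld2 (p i) (p (j - i)%Z)). rewrite Hpm. replace (i + (j - i))%Z with j by ring. reflexivity.
      + intros u v [i ->] [j ->]. exists (i - j)%Z.
        rewrite <- (Hrd2 (p j) (p (i - j)%Z)) at 1. rewrite Hpm. replace (i - j + j)%Z with i by ring; reflexivity.
    - intros w ->. exists 1%Z. simpl. unfold p; simpl. now rewrite H1l. }
  assert (HPn : forall n, S (npow mul e a n)).
  { induction n as [|n IH]; intros P HP HA; destruct HP as (He & Hm & Hl & Hr).
    - exact He.
    - simpl. apply Hm. apply IH; [repeat split; assumption | exact HA]. apply HA; reflexivity. }
  assert (HPS : forall i, S (p i)).
  { intros [|q|q]; unfold p; simpl.
    - intros P [He _] _; exact He.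
    - apply HPn.
    - intros P HP HA. pose proof HP as (He & Hm & Hl & Hr). apply Hl; [|exact He].
      apply (HPn _ P HP HA). }
  intros x y.
  destruct (classic (exists z, lcoset mul x S z /\ lcoset mul y S z)) as [[z [[s [Hs Hzs]] [t [Ht Hzt]]]]|Hn].
  - right.
    destruct (HSP _ Hs) as [i ->]. destruct (HSP _ Ht) as [j ->].
    assert (Ex : x = mul y (p (j - i)%Z)).
    { transitivity (mul (mul x (p i)) (p (- i)%Z)).
      - rewrite Hx. replace (i + - i)%Z with 0%Z by ring. now rewrite Hp0, H1r.
      - rewrite <- Hzs, Hzt, Hx. now replace (j + - i)%Z with (j - i)%Z by ring. }
    intro w; split; intros [u [Hu ->]]; destruct (HSP _ Hu) as [k ->].
    + exists (p (j - i + k)%Z). split; [apply HPS|]. rewrite Ex. apply Hx.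
    + exists (p (i - j + k)%Z). split; [apply HPS|]. rewrite Ex, Hx. now replace (j - i + (i - j + k))%Z with k by ring.
  - left. intros z Hz. apply Hn. exists z. exact Hz.
Qed.
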